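(* Let $p,d\in C^{2}([0,\infty),\mathbb{R})$, $b\in C^2([0,\infty),\mathbb{C})$, $c\in C^1([0,\infty),\mathbb{C})$, $q\in C([0,\infty),\mathbb{R})$ with $p>0$ on $[0,\infty)$, and assume: (B1) the (possibly improper) limit $d_\infty:=\lim_{t\to\infty}d(t)\in\mathbb{R}\cup\{\pm\infty\}$ exists; (B2) there are constants $\beta,\gamma>0$ with $|b(t)|\le\beta(|d(t)|+1)$ and $|c(t)|\le\gamma(|d(t)|+1)$ for all $t\ge0$; (B3a) for some $\lambda\in\mathbb{R}\setminus\{d_\infty\}$ there is $t_\lambda\ge0$ with $\lambda\notin d([t_\lambda,\infty))$ and $\pi(\cdot,\lambda)$ bounded on $[t_\lambda,\infty)$; (B3b) for every $\lambda\in\mathbb{R}\setminus(\overline{\Delta([0,\infty))}\cup\{d_\infty\})$ there is $t_\lambda\ge0$ with $\lambda\notin d([t_\lambda,\infty))$ and $\rho(\cdot,\lambda)$, $\kappa(\cdot,\lambda)$, $1/\pi(\cdot,\lambda)$ bounded on $[t_\lambda,\infty)$; (C) for every $\lambda\in\mathbb{R}\setminus(\overline{\Delta([0,\infty))}\cup\{d_\infty\})$ the limits $\lim_{t\to\infty}\frac{\rho(t,\lambda)}{\pi(t,\lambda)}$ and $\lim_{t\to\infty}\frac{\kappa(t,\lambda)}{\pi(t,\lambda)}$ exist and are finite. Then for every $\lambda\in\mathbb{R}\setminus(\overline{\Delta([0,\infty))}\cup\{d_\infty\})$ the limits below exist, are finite and satisfy $$\lim_{t\to\infty}\frac{\frac{\partial}{\partial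 t}\pi(t,\lambda)}{\pi(t,\lambda)}=0,\qquad \lim_{t\to\infty}\frac{\rho(t,\lambda)}{\pi(t,\lambda)}\in\mathbb{R},\qquad \lim_{t\to\infty}\frac{\kappa(t,\lambda)}{\pi(t,\lambda)}\in\mathbb{R}.$$
   Context: Notation: $\Delta(t):=d(t)-|b(t)|^2/p(t)$. For $t$ with $d(t)\ne\lambda$: $\pi(t,\lambda):=p(t)-\frac{|b(t)|^2}{d(t)-\lambda}$, $\rho(t,\lambda):=-\frac{2\operatorname{Im}(b(t)\overline{c(t)})}{d(t)-\lambda}+i\frac{\partial}{\partial t}\pi(t,\lambda)$, $\kappa(t,\lambda):=q(t)-\lambda-\frac{|c(t)|^2}{d(t)-\lambda}+\frac{\partial}{\partial t}\Big(\frac{\overline{b(t)}c(t)}{d(t)-\lambda}\Big)$. The overline on a set denotes closure in $\mathbb{R}$. *)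

(* Defs.v *)
From Stdlib Require Import Reals.
From Coquelicot Require Import Coquelicot.
Open Scope R_scope.

(* f : R -> R is C^k on (an open neighbourhood of) [0,oo):
   at every t >= 0 the derivatives of order < k exist near t and the k-th
   derivative is continuous at t. *)
Definition Ck_half (k : nat) (f : R -> R) : Prop :=
  forall t, 0 <= t ->
    (forall j, (j < k)%nat -> locally t (fun s => ex_derive (Derive_n f j) s)) /\
    continuous (Derive_n f k) t.

Definition Ck_half_C (k : nat) (f : R -> C) : Prop :=
  Ck_half k (fun t => Re (f t)) /\ Ck_half k (fun t => Im (f t)).

Definition CDerive (f : R -> C) (t : R) : C :=
  (Derive (fun s => Re (f s)) t, Derive (fun s => Im (f s)) t).

Definition Delta (p d : R -> R) (b : R -> C) (t : R) : R :=
  d t - (Cmod (b t)) ^ 2 / p t.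

Definition pi_fn (p d : R -> R) (b : R -> C) (lam t : R) : R :=
  p t - (Cmod (b t)) ^ 2 / (d t - lam).

Definition rho_fn (p d : R -> R) (b c : R -> C) (lam t : R) : C :=
  (- 2 * Im (Cmult (b t) (Cconj (c t))) / (d t - lam),
   Derive (pi_fn p d b lam) t).

Definition kappa_fn (p d q : R -> R) (b c : R -> C) (lam t : R) : C :=
  Cplus (RtoC (q t - lam - (Cmod (c t)) ^ 2 / (d t - lam)))
        (CDerive (fun s => Cdiv (Cmult (Cconj (b s)) (c s)) (RtoC (d s - lam))) t).

Definition in_closure (S : R -> Prop) (x : R) : Prop :=
  forall eps, 0 < eps -> exists y, S y /\ Rabs (y - x) < eps.

Definition Delta_image (p d : R -> R) (b : R -> C) (y : R) : Prop :=
  exists t, 0 <= t /\ y = Delta p d b t.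

Definition admissible (p d : R -> R) (b : R -> C) (dinf : Rbar) (lam : R) : Prop :=
  ~ in_closure (Delta_image p d b) lam /\ Finite lam <> dinf.

(* Main.v *)
Require Import Defs.
From Stdlib Require Import Reals Lra Psatz.
From Coquelicot Require Import Coquelicot.
Open Scope R_scope.

Lemma Im_Cdiv_real z r : Im (Cdiv z (RtoC r)) = Im z / r.
Proof.
  destruct z as [z1 z2]. unfold Cdiv, Cmult, Cinv, RtoC, Im; simpl.
  destruct (Req_dec r 0) as [->|Hr].
  - simpl. unfold Rdiv. rewrite !Rmult_0_l, !Rmult_0_r, !Rplus_0_l. rewrite Rinv_0. ring.
  - field. auto.
Qed.

Lemma mvt_contra (h : R -> R) T c a B : 0 < a ->
  (forall t, T <= t -> ex_derive h t /\ a <= c * Derive h t) ->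
  (forall t, T <= t -> Rabs (h t) <= B) -> False.
Proof.
  intros Ha Hd Hb.
  assert (HB0 : 0 <= B) by (specialize (Hb T (Rle_refl _)); pose proof (Rabs_pos (h T)); lra).
  set (t1 := T + (2*Rabs c*B+1)/a).
  assert (Ht1 : t1 - T = (2*Rabs c*B+1)/a) by (unfold t1; ring).
  assert (Hpos : 0 < (2*Rabs c*B+1)/a).
  { apply Rdiv_lt_0_compat; [|lra]. pose proof (Rabs_pos c). nra. }
  destruct (MVT_gen h T t1 (Derive h)) as [xi [Hxi Heq]].
  - intros x Hx. rewrite Rmin_left in Hx by lra. rewrite Rmax_right in Hx by lra.
    apply Derive_correct. apply Hd. lra.
  - intros x Hx. rewrite Rmin_left in Hx by lra. rewrite Rmax_right in Hx by lra.
    apply continuity_pt_filterlim. apply (ex_derive_continuous (V:=R_NormedModule)). apply Hd. lra.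
  - rewrite Rmin_left in Hxi by lra. rewrite Rmax_right in Hxi by lra.
    destruct (Hd xi ltac:(lra)) as [_ Hc].
    assert (E : c * (h t1 - h T) = (c * Derive h xi) * (t1 - T)) by (rewrite Heq; ring).
    assert (Ge : a * (t1 - T) <= c * (h t1 - h T)).
    { rewrite E. apply Rmult_le_compat_r; lra. }
    rewrite Ht1 in Ge. replace (a * ((2 * Rabs c * B + 1) / a)) with (2 * Rabs c * B + 1) in Ge by (field; lra).
    assert (Le : Rabs (c * (h t1 - h T)) <= 2 * Rabs c * B).
    { rewrite Rabs_mult.
      assert (Rabs (h t1 - h T) <= 2 * B).
      { pose proof (Rabs_triang (h t1) (- h T)). rewrite Rabs_Ropp in H.
        pose proof (Hb t1 ltac:(lra)). pose proof (Hb T (Rle_refl _)). unfold Rminus. lra. }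
      pose proof (Rabs_pos c). nra. }
    pose proof (Rle_abs (c * (h t1 - h T))). lra.
Qed.

Lemma d_away (d : R->R) dinf mu : is_lim d p_infty dinf -> Finite mu <> dinf ->
  exists T K, 0 < K /\ forall t, T < t -> Rabs (d t) + 1 <= K * Rabs (d t - mu).
Proof.
  intros Hl Hne. apply is_lim_spec in Hl.
  destruct dinf as [D| |]; simpl in Hl.
  - assert (HD : D <> mu) by (intro; subst; apply Hne; reflexivity).
    set (e := Rabs (D - mu) / 2).
    assert (He : 0 < e) by (unfold e; assert (0 < Rabs (D - mu)) by (apply Rabs_pos_lt; lra); lra).
    destruct (Hl (mkposreal e He)) as [T HT]. simpl in HT.
    exists T, ((Rabs D + e + 1)/e). split.
    { apply Rdiv_lt_0_compat; [pose proof (Rabs_pos D)|]; lra. }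
    intros t Ht. specialize (HT t Ht).
    assert (H1 : e <= Rabs (d t - mu)).
    { pose proof (Rabs_triang (D - d t) (d t - mu)).
      replace (D - d t + (d t - mu)) with (D - mu) in H by ring.
      rewrite <- Rabs_Ropp in HT. replace (- (d t - D)) with (D - d t) in HT by ring.
      unfold e in *. lra. }
    assert (H2 : Rabs (d t) <= Rabs D + e).
    { pose proof (Rabs_triang (d t - D) D). replace (d t - D + D) with (d t) in H by ring. lra. }
    apply Rle_trans with ((Rabs D + e + 1)/e * e).
    + replace ((Rabs D + e + 1) / e * e) with (Rabs D + e + 1) by (field; lra). lra.
    + apply Rmult_le_compat_l; [|lra]. apply Rlt_le, Rdiv_lt_0_compat; [pose proof (Rabs_pos D)|]; lra.
  - destruct (Hl (2 * Rabs mu + 1)) as [T HT].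
    exists T, 2. split; [lra|]. intros t Ht. specialize (HT t Ht).
    pose proof (Rabs_pos mu). pose proof (Rle_abs mu).
    rewrite (Rabs_right (d t)) by lra. rewrite (Rabs_right (d t - mu)) by lra. lra.
  - destruct (Hl (- (2 * Rabs mu + 1))) as [T HT].
    exists T, 2. split; [lra|]. intros t Ht. specialize (HT t Ht).
    pose proof (Rabs_pos mu). pose proof (Rle_abs (-mu)). rewrite Rabs_Ropp in H0.
    rewrite (Rabs_left (d t)) by lra. rewrite (Rabs_left (d t - mu)) by lra. lra.
Qed.

Definition ev_lim (f : R -> R) (l : R) := forall eps, 0 < eps -> exists T, forall t, T < t -> Rabs (f t - l) < eps.

Lemma lim_Im_ev (f : R -> C) L : filterlim f (Rbar_locally p_infty) (locally L) ->
  ev_lim (fun t => Im (f t)) (Im L).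
Proof.
  intros H eps Heps.
  assert (Hs : 0 < eps / sqrt 2) by (apply Rdiv_lt_0_compat; [lra| apply sqrt_lt_R0; lra]).
  destruct (proj1 (filterlim_locally f L) H (mkposreal _ Hs)) as [T HT].
  exists T. intros t Ht. specialize (HT t Ht). simpl in HT.
  pose proof (C_NormedModule_mixin_compat2 L (f t) (mkposreal _ Hs) HT) as HT2. clear HT. rename HT2 into HT. simpl in HT.
  replace (sqrt 2 * (eps / sqrt 2)) with eps in HT by (field; apply Rgt_not_eq, sqrt_lt_R0; lra).
  eapply Rle_lt_trans; [|exact HT].
  destruct (f t) as [a b], L as [c e]. unfold Im; simpl.
  apply (Rle_trans _ (Rabs (Im (minus (a, b) (c, e))))); [right; reflexivity|].
  eapply Rle_trans; [apply Rmax_r| apply Rmax_Cmod].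
Qed.

Lemma ev_is_lim f l : ev_lim f l -> is_lim f p_infty l.
Proof.
  intros H. apply is_lim_spec. simpl. intros eps. destruct (H eps (cond_pos eps)) as [T HT].
  exists T. exact HT.
Qed.

Lemma ev_lim_ext f g l : (forall t, f t = g t) -> ev_lim f l -> ev_lim g l.
Proof. intros E H eps He. destruct (H eps He) as [T HT]. exists T. intros t Ht. rewrite <- E. auto. Qed.

Lemma Ck_ex_derive k f t : (0 < k)%nat -> Ck_half k f -> 0 <= t -> ex_derive f t.
Proof.
  intros Hk H Ht. destruct (H t Ht) as [H1 _].
  exact (locally_singleton _ _ (H1 0%nat Hk)).
Qed.

Lemma frac_bound X u v K : u <> 0 -> v <> 0 -> 0 <= X -> X <= K * Rabs u * Rabs v ->
  Rabs (X/v - X/u) <= K * Rabs (u - v).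
Proof.
  intros Hu Hv HX HK.
  replace (X/v - X/u) with (X * (u - v) / (u * v)) by (field; auto).
  unfold Rdiv. rewrite !Rabs_mult, Rabs_inv, Rabs_mult, (Rabs_right X) by lra.
  assert (Pu : 0 < Rabs u) by (apply Rabs_pos_lt; auto).
  assert (Pv : 0 < Rabs v) by (apply Rabs_pos_lt; auto).
  apply (Rmult_le_reg_r (Rabs u * Rabs v)); [nra|].
  rewrite Rmult_assoc, Rinv_l by nra.
  pose proof (Rabs_pos (u - v)). nra.
Qed.

Lemma pi_ex_derive p d (b : R -> C) lam t :
  ex_derive p t -> ex_derive d t -> ex_derive (fun s => Re (b s)) t -> ex_derive (fun s => Im (b s)) t ->
  d t <> lam -> ex_derive (pi_fn p d b lam) t.
Proof.
  intros H1 H2 H3 H4 H5.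
  apply ex_derive_ext with (fun s => p s - (Re (b s) ^ 2 + Im (b s) ^ 2) / (d s - lam)).
  { intros s. unfold pi_fn. rewrite Cmod2_alt. reflexivity. }
  apply (ex_derive_minus (K:=R_AbsRing) (V:=R_NormedModule) p (fun s => (Re (b s) ^ 2 + Im (b s) ^ 2) / (d s - lam))); auto.
  apply ex_derive_div.
  - apply (ex_derive_plus (K:=R_AbsRing) (V:=R_NormedModule) (fun s => Re (b s) ^ 2) (fun s => Im (b s) ^ 2));
      apply ex_derive_pow; auto.
  - apply (ex_derive_minus (K:=R_AbsRing) (V:=R_NormedModule) d (fun _ => lam)); auto. apply ex_derive_const.
  - lra.
Qed.

Definition gfun d (b c : R -> C) lam s := Im (Cdiv (Cmult (Cconj (b s)) (c s)) (RtoC (d s - lam))).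

Lemma g_ex_derive d (b c : R -> C) lam t :
  ex_derive d t -> ex_derive (fun s => Re (b s)) t -> ex_derive (fun s => Im (b s)) t ->
  ex_derive (fun s => Re (c s)) t -> ex_derive (fun s => Im (c s)) t ->
  d t <> lam -> ex_derive (gfun d b c lam) t.
Proof.
  intros H2 H3 H4 H6 H7 H5.
  apply ex_derive_ext with (fun s => (Re (b s) * Im (c s) - Im (b s) * Re (c s)) / (d s - lam)).
  { intros s. unfold gfun. rewrite Im_Cdiv_real. destruct (b s), (c s). unfold Im, Re, Cmult, Cconj; simpl. f_equal. ring. }
  apply ex_derive_div.
  - apply (ex_derive_minus (K:=R_AbsRing) (V:=R_NormedModule) (fun s => Re (b s) * Im (c s)) (fun s => Im (b s) * Re (c s)));
      apply ex_derive_mult; auto.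
  - apply (ex_derive_minus (K:=R_AbsRing) (V:=R_NormedModule) d (fun _ => lam)); auto. apply ex_derive_const.
  - lra.
Qed.

Lemma Im_rho_div p d (b c : R -> C) lam t :
  Im (Cdiv (rho_fn p d b c lam t) (RtoC (pi_fn p d b lam t))) = Derive (pi_fn p d b lam) t / pi_fn p d b lam t.
Proof. rewrite Im_Cdiv_real. reflexivity. Qed.

Lemma Im_kappa_div p d q (b c : R -> C) lam t :
  Im (Cdiv (kappa_fn p d q b c lam t) (RtoC (pi_fn p d b lam t))) = Derive (gfun d b c lam) t / pi_fn p d b lam t.
Proof.
  rewrite Im_Cdiv_real. unfold kappa_fn, CDerive, gfun, Cplus, RtoC, Im. simpl. rewrite Rplus_0_l. reflexivity.
Qed.

Lemma g_rho p d (b c : R -> C) lam t :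
  gfun d b c lam t = Re (rho_fn p d b c lam t) / 2.
Proof.
  unfold gfun, rho_fn. rewrite Im_Cdiv_real. unfold Re. simpl.
  destruct (b t), (c t). unfold Im, Cmult, Cconj; simpl. unfold Rdiv. set (u := / (d t - lam)). field.
Qed.

Lemma pi_diff p d (b : R -> C) lam lam0 t :
  pi_fn p d b lam t = pi_fn p d b lam0 t + ((Cmod (b t))^2 / (d t - lam0) - (Cmod (b t))^2 / (d t - lam)).
Proof. unfold pi_fn. ring. Qed.
Theorem lemma4p2 (p d q : R -> R) (b c : R -> C) (dinf : Rbar) :
  Ck_half 2 p -> Ck_half 2 d -> Ck_half_C 2 b -> Ck_half_C 1 c -> Ck_half 0 q ->
  (forall t, 0 <= t -> 0 < p t) ->
  (* (B1) *)
  is_lim d p_infty dinf ->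
  (* (B2) *)
  (exists beta gamma, 0 < beta /\ 0 < gamma /\
     forall t, 0 <= t ->
       Cmod (b t) <= beta * (Rabs (d t) + 1) /\ Cmod (c t) <= gamma * (Rabs (d t) + 1)) ->
  (* (B3a) *)
  (exists lam, Finite lam <> dinf /\
     exists tl, 0 <= tl /\ (forall t, tl <= t -> d t <> lam) /\
       exists M, forall t, tl <= t -> Rabs (pi_fn p d b lam t) <= M) ->
  (* (B3b) *)
  (forall lam, admissible p d b dinf lam ->
     exists tl, 0 <= tl /\ (forall t, tl <= t -> d t <> lam) /\
       exists M, forall t, tl <= t ->
         Cmod (rho_fn p d b c lam t) <= M /\
         Cmod (kappa_fn p d q b c lam t) <= M /\
         Rabs (/ pi_fn p d b lam t) <= M) ->
  (* (C) *)
  (forall lam, admissible p d b dinf lam ->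
     (exists L : C, filterlim (fun t => Cdiv (rho_fn p d b c lam t) (RtoC (pi_fn p d b lam t)))
                      (Rbar_locally p_infty) (locally L)) /\
     (exists L : C, filterlim (fun t => Cdiv (kappa_fn p d q b c lam t) (RtoC (pi_fn p d b lam t)))
                      (Rbar_locally p_infty) (locally L))) ->
  forall lam, admissible p d b dinf lam ->
    is_lim (fun t => Derive (pi_fn p d b lam) t / pi_fn p d b lam t) p_infty 0 /\
    (exists L : R, filterlim (fun t => Cdiv (rho_fn p d b c lam t) (RtoC (pi_fn p d b lam t)))
                     (Rbar_locally p_infty) (locally (RtoC L))) /\
    (exists L : R, filterlim (fun t => Cdiv (kappa_fn p d q b c lam t) (RtoC (pi_fn p d b lam t)))
                     (Rbar_locally p_infty) (locally (RtoC L))).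
Proof.
  intros Hp Hd [Hb1 Hb2] [Hc1 Hc2] Hq Hpos Hlim [beta [gamma [Hbeta [Hgamma HB2]]]]
    [lam0 [Hlam0 [tl0 [Htl0 [Hdl0 [M0 HM0]]]]]] HB3b HC lam Hadm.
  destruct (HB3b lam Hadm) as [tl [Htl [Hdl [M HM]]]].
  destruct (HC lam Hadm) as [[L1 HL1] [L2 HL2]].
  set (P := pi_fn p d b lam) in *.
  set (g := gfun d b c lam).
  destruct (d_away d dinf lam Hlim (proj2 Hadm)) as [T1 [K1 [HK1 HT1]]].
  destruct (d_away d dinf lam0 Hlim Hlam0) as [T2 [K2 [HK2 HT2]]].
  set (K := Rmax K1 K2).
  set (B := M0 + beta^2 * K^2 * Rabs (lam - lam0)).
  set (T0 := Rmax (Rmax T1 T2) (Rmax tl0 tl)).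
  assert (Fact : forall t, T0 < t ->
     0 <= t /\ d t <> lam /\ ex_derive P t /\ ex_derive g t /\ Rabs (P t) <= B /\
     Rabs (/ P t) <= M /\ Rabs (g t) <= M/2 /\ 0 <= M).
  { intros t Ht.
    assert (H1 : T1 < t) by (unfold T0 in Ht; pose proof (Rmax_l T1 T2); pose proof (Rmax_l (Rmax T1 T2) (Rmax tl0 tl)); lra).
    assert (H2 : T2 < t) by (unfold T0 in Ht; pose proof (Rmax_r T1 T2); pose proof (Rmax_l (Rmax T1 T2) (Rmax tl0 tl)); lra).
    assert (H3 : tl0 < t) by (unfold T0 in Ht; pose proof (Rmax_l tl0 tl); pose proof (Rmax_r (Rmax T1 T2) (Rmax tl0 tl)); lra).
    assert (H4 : tl < t) by (unfold T0 in Ht; pose proof (Rmax_r tl0 tl); pose proof (Rmax_r (Rmax T1 T2) (Rmax tl0 tl)); lra).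
    assert (Ht0 : 0 <= t) by lra.
    assert (Hdt : d t <> lam) by (apply Hdl; lra).
    destruct (HM t ltac:(lra)) as [HMr [HMk HMp]].
    assert (HM0' : 0 <= M) by (pose proof (Rabs_pos (/ P t)); lra).
    repeat split; auto.
    - apply pi_ex_derive; auto; apply (Ck_ex_derive 2); auto.
    - pose proof (Ck_ex_derive 1 _ t (le_n 1) Hc1 Ht0).
      pose proof (Ck_ex_derive 1 _ t (le_n 1) Hc2 Ht0).
      apply g_ex_derive; auto; apply (Ck_ex_derive 2); auto.
    - unfold P. rewrite (pi_diff p d b lam lam0 t).
      eapply Rle_trans; [apply Rabs_triang|]. unfold B.
      apply Rplus_le_compat; [apply HM0; lra|].
      specialize (HT1 t H1). specialize (HT2 t H2).
      destruct (HB2 t Ht0) as [Hbb _].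
      assert (Ha1 : Rabs (d t) + 1 <= K * Rabs (d t - lam)).
      { eapply Rle_trans; [exact HT1|]. apply Rmult_le_compat_r; [apply Rabs_pos| apply Rmax_l]. }
      assert (Ha2 : Rabs (d t) + 1 <= K * Rabs (d t - lam0)).
      { eapply Rle_trans; [exact HT2|]. apply Rmult_le_compat_r; [apply Rabs_pos| apply Rmax_r]. }
      pose proof (Rabs_pos (d t)).
      assert (Hu : d t - lam <> 0).
      { intro E. rewrite E, Rabs_R0 in Ha1. lra. }
      assert (Hv : d t - lam0 <> 0).
      { intro E. rewrite E, Rabs_R0 in Ha2. lra. }
      replace (Rabs (lam - lam0)) with (Rabs ((d t - lam) - (d t - lam0))).
      2:{ rewrite Rabs_minus_sym. f_equal. ring. }
      apply frac_bound; auto.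
      + apply pow2_ge_0.
      + pose proof (Cmod_ge_0 (b t)).
        assert (E1 : Cmod (b t) <= beta * K * Rabs (d t - lam)).
        { eapply Rle_trans; [exact Hbb|]. rewrite Rmult_assoc. apply Rmult_le_compat_l; lra. }
        assert (E2 : Cmod (b t) <= beta * K * Rabs (d t - lam0)).
        { eapply Rle_trans; [exact Hbb|]. rewrite Rmult_assoc. apply Rmult_le_compat_l; lra. }
        replace (beta ^ 2 * K ^ 2 * Rabs (d t - lam) * Rabs (d t - lam0))
          with ((beta * K * Rabs (d t - lam)) * (beta * K * Rabs (d t - lam0))) by ring.
        replace (Cmod (b t) ^ 2) with (Cmod (b t) * Cmod (b t)) by ring.
        apply Rmult_le_compat; auto.
    - unfold g. rewrite (g_rho p). unfold Rdiv. rewrite Rabs_mult.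
      rewrite (Rabs_right (/2)) by lra.
      apply Rmult_le_compat_r; [lra|]. eapply Rle_trans; [apply re_le_Cmod|exact HMr]. }

  assert (HMnn : 0 <= M) by (destruct (Fact (T0 + 1) ltac:(lra)) as [_ [_ [_ [_ [_ [_ [_ X]]]]]]]; exact X).
  assert (Hr : ev_lim (fun t => Derive P t / P t) (Im L1)).
  { eapply ev_lim_ext; [|apply (lim_Im_ev _ _ HL1)]. intros t. simpl. apply Im_rho_div. }
  assert (Hc0 : Im L1 = 0).
  { destruct (Req_dec (Im L1) 0) as [E|Hne]; [exact E|exfalso].
    set (cc := Im L1) in *.
    assert (Hcp : 0 < Rabs cc) by (apply Rabs_pos_lt; auto).
    assert (Hcc : 0 < cc * cc) by (apply Rsqr_pos_lt; auto).
    destruct (Hr (Rabs cc / 2) ltac:(lra)) as [T3 HT3].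
    apply (mvt_contra (fun s => P s * P s) (Rmax T0 T3 + 1) cc (cc^2/(M^2+1)) (B*B)).
    - apply Rdiv_lt_0_compat; nra.
    - intros t Ht.
      assert (Ha : T0 < t) by (pose proof (Rmax_l T0 T3); lra).
      assert (Hb' : T3 < t) by (pose proof (Rmax_r T0 T3); lra).
      destruct (Fact t Ha) as [_ [_ [HdP [_ [_ [HiP _]]]]]].
      assert (Hder : is_derive (fun s => P s * P s) t (Derive P t * P t + P t * Derive P t)).
      { apply (is_derive_mult P P); [apply Derive_correct; auto|apply Derive_correct; auto|].
        intros; apply Rmult_comm. }
      split; [exists (Derive P t * P t + P t * Derive P t); exact Hder|].
      assert (ED : Derive (fun s => P s * P s) t = Derive P t * P t + P t * Derive P t) by (apply is_derive_unique; exact Hder).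
      rewrite ED.
      specialize (HT3 t Hb').
      assert (HP0 : P t <> 0).
      { intro E. rewrite E in HT3. unfold Rdiv in HT3. rewrite Rinv_0, Rmult_0_r, Rminus_0_l, Rabs_Ropp in HT3. lra. }
      set (r := Derive P t / P t) in HT3.
      assert (Dr : Derive P t = r * P t) by (unfold r; field; auto).
      rewrite Dr.
      assert (Hcr : cc^2/2 <= cc * r).
      { pose proof (Rle_abs (-(cc*(r-cc)))). rewrite Rabs_Ropp, Rabs_mult in H.
        assert (Rabs cc * Rabs (r - cc) <= Rabs cc * (Rabs cc / 2)) by (apply Rmult_le_compat_l; lra).
        assert (Rabs cc * Rabs cc = cc * cc) by (rewrite <- Rabs_mult; apply Rabs_right; nra).
        nra. }
      assert (HPi : 1 <= (M^2+1) * (P t * P t)).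
      { rewrite Rabs_inv in HiP. assert (HPa : 0 < Rabs (P t)) by (apply Rabs_pos_lt; auto).
        assert (1 <= M * Rabs (P t)).
        { apply (Rmult_le_compat_r (Rabs (P t))) in HiP; [|lra]. rewrite Rinv_l in HiP by lra. exact HiP. }
        assert (Rabs (P t) * Rabs (P t) = P t * P t) by (rewrite <- Rabs_mult; apply Rabs_right; nra).
        nra. }
      assert (cc ^ 2 / (M ^ 2 + 1) <= cc^2 * (P t * P t)).
      { apply (Rmult_le_reg_r (M^2+1)); [nra|]. unfold Rdiv. rewrite Rmult_assoc, Rinv_l by nra. nra. }
      assert (0 <= P t * P t) by nra.
      nra.
    - intros t Ht.
      assert (Ha : T0 < t) by (pose proof (Rmax_l T0 T3); lra).
      destruct (Fact t Ha) as [_ [_ [_ [_ [HPB _]]]]].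
      rewrite Rabs_mult. pose proof (Rabs_pos (P t)). nra. }
  assert (Hr0 : ev_lim (fun t => Derive P t / P t) 0) by (rewrite <- Hc0; exact Hr).
  assert (Hf : ev_lim (fun t => Derive g t / P t) (Im L2)).
  { eapply ev_lim_ext; [|apply (lim_Im_ev _ _ HL2)]. intros t. simpl. apply Im_kappa_div. }
  assert (HBnn : 0 <= B) by (destruct (Fact (T0 + 1) ltac:(lra)) as [_ [_ [_ [_ [X _]]]]]; pose proof (Rabs_pos (P (T0+1))); lra).
  assert (Hc2' : Im L2 = 0).
  { destruct (Req_dec (Im L2) 0) as [E|Hne]; [exact E|exfalso].
    set (cc := Im L2) in *.
    assert (Hcp : 0 < Rabs cc) by (apply Rabs_pos_lt; auto).
    assert (Hcc : 0 < cc * cc) by (apply Rsqr_pos_lt; auto).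
    destruct (Hf (Rabs cc / 2) ltac:(lra)) as [T3 HT3].
    assert (HM2 : 0 < M^2 + 1) by nra.
    set (e := Rabs cc / (4 * (M^2 + 1) * (M + 1) * (B + 1))).
    assert (He : 0 < e) by (unfold e; apply Rdiv_lt_0_compat; [lra|]; apply Rmult_lt_0_compat; [|lra]; apply Rmult_lt_0_compat; lra).
    assert (HeM : (M + 1) * e * (B + 1) = Rabs cc / (4 * (M^2 + 1))) by (unfold e; field; lra).
    destruct (Hr0 e He) as [T4 HT4].
    set (T5 := Rmax T0 (Rmax T3 T4)).
    apply (mvt_contra (fun s => g s * P s) (T5 + 1) cc (cc^2/(4*(M^2+1))) ((M/2)*B)).
    - apply Rdiv_lt_0_compat; nra.
    - intros t Ht.
      assert (Ha : T0 < t) by (pose proof (Rmax_l T0 (Rmax T3 T4)); unfold T5 in Ht; lra).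
      assert (Hb' : T3 < t) by (pose proof (Rmax_r T0 (Rmax T3 T4)); pose proof (Rmax_l T3 T4); unfold T5 in Ht; lra).
      assert (Hb4 : T4 < t) by (pose proof (Rmax_r T0 (Rmax T3 T4)); pose proof (Rmax_r T3 T4); unfold T5 in Ht; lra).
      destruct (Fact t Ha) as [_ [_ [HdP [Hdg [HPB [HiP [Hg _]]]]]]].
      assert (Hder : is_derive (fun s => g s * P s) t (Derive g t * P t + g t * Derive P t)).
      { apply (is_derive_mult g P); [apply Derive_correct; auto|apply Derive_correct; auto|].
        intros; apply Rmult_comm. }
      split; [exists (Derive g t * P t + g t * Derive P t); exact Hder|].
      assert (ED : Derive (fun s => g s * P s) t = Derive g t * P t + g t * Derive P t) by (apply is_derive_unique; exact Hder).
      rewrite ED.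
      specialize (HT3 t Hb'). specialize (HT4 t Hb4).
      assert (HP0 : P t <> 0).
      { intro E. rewrite E in HT3. unfold Rdiv in HT3. rewrite Rinv_0, Rmult_0_r, Rminus_0_l, Rabs_Ropp in HT3. lra. }
      set (f2 := Derive g t / P t) in HT3.
      set (r := Derive P t / P t) in HT4.
      rewrite Rminus_0_r in HT4.
      assert (Dr : Derive P t = r * P t) by (unfold r; field; auto).
      assert (Dg : Derive g t = f2 * P t) by (unfold f2; field; auto).
      rewrite Dr, Dg.
      assert (Hcr : cc^2/2 <= cc * f2).
      { pose proof (Rle_abs (-(cc*(f2-cc)))). rewrite Rabs_Ropp, Rabs_mult in H.
        assert (Rabs cc * Rabs (f2 - cc) <= Rabs cc * (Rabs cc / 2)) by (apply Rmult_le_compat_l; lra).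
        assert (Rabs cc * Rabs cc = cc * cc) by (rewrite <- Rabs_mult; apply Rabs_right; nra).
        nra. }
      assert (Hgr : Rabs (cc * g t * r * P t) <= cc^2/(4*(M^2+1))).
      { rewrite !Rabs_mult.
        assert (Rabs (g t) * Rabs r <= (M + 1) * e).
        { apply Rmult_le_compat; try apply Rabs_pos; lra. }
        assert (Rabs (g t) * Rabs r * Rabs (P t) <= (M + 1) * e * (B + 1)).
        { apply Rmult_le_compat; try apply Rabs_pos; try lra. apply Rmult_le_pos; apply Rabs_pos. }
        assert (Rabs cc * Rabs cc = cc * cc) by (rewrite <- Rabs_mult; apply Rabs_right; nra).
        rewrite HeM in H0. pose proof (Rabs_pos cc).
        replace (Rabs cc * Rabs (g t) * Rabs r * Rabs (P t)) with (Rabs cc * (Rabs (g t) * Rabs r * Rabs (P t))) by ring.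
        apply Rle_trans with (Rabs cc * (Rabs cc / (4 * (M ^ 2 + 1)))).
        - apply Rmult_le_compat_l; lra.
        - right. unfold Rdiv. rewrite <- Rmult_assoc, H1. ring. }
      assert (HPi : 1 <= (M^2+1) * (P t * P t)).
      { rewrite Rabs_inv in HiP. assert (HPa : 0 < Rabs (P t)) by (apply Rabs_pos_lt; auto).
        assert (1 <= M * Rabs (P t)).
        { apply (Rmult_le_compat_r (Rabs (P t))) in HiP; [|lra]. rewrite Rinv_l in HiP by lra. exact HiP. }
        assert (Rabs (P t) * Rabs (P t) = P t * P t) by (rewrite <- Rabs_mult; apply Rabs_right; nra).
        nra. }
      assert (H2 : cc ^ 2 / (2 * (M ^ 2 + 1)) <= cc^2/2 * (P t * P t)).
      { apply (Rmult_le_reg_r (2 * (M^2+1))); [nra|]. unfold Rdiv. rewrite Rmult_assoc, Rinv_l by nra. nra. }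
      assert (0 <= P t * P t) by nra.
      assert (H3 : cc^2/2 * (P t * P t) <= (cc * f2) * (P t * P t)) by (apply Rmult_le_compat_r; lra).
      replace (cc * (f2 * P t * P t + g t * (r * P t))) with ((cc * f2) * (P t * P t) + cc * g t * r * P t) by ring.
      pose proof (Rle_abs (- (cc * g t * r * P t))) as H4. rewrite Rabs_Ropp in H4.
      replace (cc ^ 2 / (2 * (M ^ 2 + 1))) with (2 * (cc ^ 2 / (4 * (M ^ 2 + 1)))) in H2 by (field; lra).
      lra.
    - intros t Ht.
      assert (Ha : T0 < t) by (pose proof (Rmax_l T0 (Rmax T3 T4)); unfold T5 in Ht; lra).
      destruct (Fact t Ha) as [_ [_ [_ [_ [HPB [_ [Hg _]]]]]]].
      rewrite Rabs_mult. pose proof (Rabs_pos (P t)). pose proof (Rabs_pos (g t)). nra. }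
  split; [|split].
  - apply ev_is_lim. rewrite Hc0 in Hr. exact Hr.
  - destruct L1 as [l1 l2]. simpl in Hc0. subst l2. exists l1. exact HL1.
  - destruct L2 as [l1 l2]. simpl in Hc2'. subst l2. exists l1. exact HL2.
Qed.
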